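(* Let $p$ be even with $3 \le p \le \sqrt{n}$, and let $\ell$ be an integer with $p/2\le\ell$ and $\ell < n/p^2$. For $0\le m\le\ell$ let \[\mu_m = \sum_{s=0}^{\min(m,p/2)} (-1)^s\binom{m}{s}\binom{\ell-m}{p/2-s}\binom{n-\ell-m}{p/2-s}.\] Then for all $0 \le m\le \ell$, \[\frac{|\mu_m|}{\mu_0} \le \max\left\{\left(1-\frac{m}{\ell}\right)^{p/2},\ \frac{p}{n}\right\}.\]
   Context: The $\mu_m$ are the eigenvalues of the matrix $\mathbf{X}$ indexed by $\ell$-subsets of $[n]$ with $\mathbf{X}_{S,T}=\mathbf{1}_{|S\triangle T|=p}$; in particular $\mu_0 = \binom{\ell}{p/2}\binom{n-\ell}{p/2}$. Binomial coefficients $\binom{a}{b}$ are $0$ when $b<0$ or $b>a$. *)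

(* Defs.v *)
From mathcomp Require Import all_boot all_order all_algebra.
Set Implicit Arguments. Unset Strict Implicit. Unset Printing Implicit Defensive.
Import Order.TTheory GRing.Theory Num.Theory.
Local Open Scope ring_scope.

(* Natural-number subtractions are only used where they are nonnegative
   (s <= p/2, m <= l, l + m <= n under the theorem's hypotheses). *)
Definition mu (n l p m : nat) : int :=
  \sum_(0 <= s < (minn m p./2).+1)
    (-1) ^+ s * ('C(m, s) * 'C(l - m, p./2 - s) * 'C(n - l - m, p./2 - s))%:R.

(* Main.v *)
Require Import Defs.
From mathcomp Require Import all_boot all_order all_algebra.
From mathcomp Require Import zify ring.
Import Order.TTheory GRing.Theory Num.Theory.

Lemma L1 d j k : (j < k)%N -> ('C(d, j) * (d.+1 - k) <= k * 'C(d, j.+1))%N.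
Proof.
move=> hjk.
have -> : (k * 'C(d, j.+1) = (k - j.+1) * 'C(d, j.+1) + j.+1 * 'C(d, j.+1))%N.
  by rewrite -mulnDl subnK.
rewrite mul_bin_left mulnC.
apply: leq_trans (leq_addl _ _); apply: leq_mul => //.
lia.
Qed.

Lemma L2 d k s : (s <= k)%N ->
  ('C(d, k - s) * (d.+1 - k) ^ s <= k ^ s * 'C(d, k))%N.
Proof.
elim: s => [|s IH] hs; first by rewrite subn0 expn0 muln1 mul1n.
have h1 := L1 d (k - s.+1) k ltac:(lia).
have e : (k - s.+1).+1 = k - s by lia.
rewrite e in h1.
rewrite expnS mulnA.
apply: (leq_trans (leq_mul h1 (leqnn _))).
rewrite -mulnA expnS -mulnA leq_mul2l; apply/orP; right.
exact: IH (ltnW hs).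
Qed.

Lemma Lmono N k j : (j < k)%N -> (k <= N.+1 - k)%N -> ('C(N, j) <= 'C(N, j.+1))%N.
Proof.
move=> hjk hk.
have := L1 N j k hjk.
case: (posnP 'C(N, j.+1)) => [->|hp]; first by rewrite muln0 leqn0 muln_eq0; lia.
move=> h; have : ('C(N, j) * k <= k * 'C(N, j.+1))%N.
  exact: leq_trans (leq_mul (leqnn _) hk) h.
rewrite mulnC leq_mul2l; case/orP => //; lia.
Qed.

Lemma Lmono2 N k s : (s <= k)%N -> (k <= N.+1 - k)%N -> ('C(N, k - s) <= 'C(N, k))%N.
Proof.
move=> hs hk; elim: s hs => [|s IH] hs; first by rewrite subn0.
apply: leq_trans (IH (ltnW hs)).
have e : k - s = (k - s.+1).+1 by lia.
rewrite e; apply: Lmono hk; lia.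
Qed.

Lemma Lbin_exp m s : ('C(m, s) <= m ^ s)%N.
Proof.
apply: (@leq_trans ('C(m, s) * s`!)); first by rewrite leq_pmulr ?fact_gt0.
rewrite bin_ffact; elim: s => [|s IH] //.
rewrite ffactnSr expnS mulnC; apply: leq_mul => //; exact: leq_subr.
Qed.


Lemma Core u k' m M : (1 <= u)%N -> ((k'+1) ^ 3 * (u + k' + m) <= k' * M)%N ->
  (u * u * (u + k' + m) * M + m * (k'+1) * (k'+1) * (u + k') * (u + m)
     <= u * M * (u + k') * (u + m))%N.
Proof.
move=> hu h.
have e : (u * M * (u + k') * (u + m) = u * u * (u + k' + m) * M + u * M * k' * m)%N by ring.
rewrite e leq_add2l.
have h1 : (u + k' <= (k'+1) * u)%N by nia.
have h2 : (u + m <= u + k' + m)%N by lia.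
have h3 : ((k'+1) * (k'+1) * (u + k') * (u + m) <= u * ((k'+1) ^ 3 * (u + k' + m)))%N.
  apply: (@leq_trans ((k'+1) * (k'+1) * ((k'+1) * u) * (u + k' + m))).
    by apply: leq_mul => //; apply: leq_mul.
  apply: eq_leq; ring.
have h5 := leq_trans h3 (leq_mul (leqnn u) h).
apply: (@leq_trans (m * ((k'+1) * (k'+1) * (u + k') * (u + m)))); first by apply: eq_leq; ring.
apply: leq_trans (leq_mul (leqnn m) h5) _; apply: eq_leq; ring.
Qed.

Lemma L4 d l j : (d <= l)%N -> (d ^_ j * l ^ j <= d ^ j * l ^_ j)%N.
Proof.
move=> hdl; elim: j => [|j IH] //.
rewrite ffactnSr ffactnSr !expnS.
have h : ((d - j) * l <= d * (l - j))%N.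
  rewrite mulnBl mulnBr; apply: leq_sub2l; rewrite mulnC; exact: leq_mul.
have e1 : (d ^_ j * (d - j) * (l * l ^ j) = (d ^_ j * l^j) * ((d - j) * l))%N.
  by move: (d ^_ j) (l ^ j) (d - j) => x y z; ring.
have e2 : (d * d ^ j * (l ^_ j * (l - j)) = (d ^ j * l^_j) * (d * (l - j)))%N.
  by move: (d ^ j) (l ^_ j) (l - j) => x y z; ring.
rewrite e1 e2; exact: leq_mul.
Qed.

Lemma KeyB d l m k M : (2 <= k)%N -> (k <= d)%N -> l = (d + m)%N ->
  (k ^ 3 * l <= (k - 1) * M)%N ->
  (d ^_ k * l ^ k * ((d.+1 - k) * M) + m * k * k * d ^ k * l ^_ k
     <= ((d.+1 - k) * M) * d ^ k * l ^_ k)%N.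
Proof.
case: k => [//|k'] hk hkd hl h.
have hA := @L4 d l k' ltac:(lia).
rewrite !ffactnSr !expnSr.
set A := (d ^_ k' * l ^ k')%N in hA *.
set B := (d ^ k' * l ^_ k')%N in hA *.
have e1 : (d ^_ k' * (d - k') * (l ^ k' * l) * ((d.+1 - k'.+1) * M)
   = A * ((d - k') * l * ((d.+1 - k'.+1) * M)))%N.
  rewrite /A; move: (d ^_ k') (l ^ k') (d - k') (d.+1 - k'.+1) => x y z w; ring.
have e2 : (m * k'.+1 * k'.+1 * (d ^ k' * d) * (l ^_ k' * (l - k'))
   = B * (m * k'.+1 * k'.+1 * d * (l - k')))%N.
  rewrite /B; move: (d ^ k') (l ^_ k') (l - k') => x y z; ring.
have e3 : ((d.+1 - k'.+1) * M * (d ^ k' * d) * (l ^_ k' * (l - k'))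
   = B * ((d.+1 - k'.+1) * M * d * (l - k')))%N.
  rewrite /B; move: (d ^ k') (l ^_ k') (l - k') (d.+1 - k'.+1) => x y z w; ring.
rewrite e1 e2 e3.
apply: leq_trans (leq_add (leq_mul hA (leqnn _)) (leqnn _)) _.
rewrite -mulnDr leq_mul2l; apply/orP; right.
have hu : (1 <= d - k')%N by lia.
have := @Core (d - k') k' m M hu.
have e4 : (d - k' + k' = d)%N by lia.
have e5 : (l - k' = d - k' + m)%N by lia.
have e6 : (d.+1 - k'.+1 = d - k')%N by lia.
rewrite e4 e5 e6 -hl addn1.
have e7 : (k'.+1 - 1 = k')%N by lia.
rewrite e7 in h => /(_ h) H.
apply: leq_trans (leq_trans _ H) _; apply: eq_leq.
  by move: (d - k') => u; ring.
by move: (d - k') => u; ring.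
Qed.
Local Open Scope ring_scope.

Lemma mu0E n l p : mu n l p 0 = ('C(l, p./2) * 'C(n - l, p./2))%:R.
Proof.
rewrite /mu min0n big_nat1 expr0 mul1r bin0 mul1n !subn0.
by [].
Qed.

Lemma mu_norm n l p m :
  `|mu n l p m| <= (\sum_(0 <= s < (minn m p./2).+1)
      ('C(m, s) * 'C(l - m, p./2 - s) * 'C(n - l - m, p./2 - s)))%:R.
Proof.
rewrite /mu natr_sum; apply: le_trans (ler_norm_sum _ _ _) _.
apply: ler_sum => s _.
by rewrite normrM normrX normrN1 expr1n mul1r normr_nat.
Qed.

Lemma sum_ext (f : nat -> nat) a b : (a <= b)%N ->
  (\sum_(0 <= s < a) f s <= \sum_(0 <= s < b) f s)%N.
Proof. by move=> hab; rewrite (big_cat_nat (leq0n a) hab) /= leq_addr. Qed.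

Lemma caseA n l m k : (l < m + k)%N -> (m <= l)%N -> (k <= (n - l).+1 - k)%N ->
  ((\sum_(0 <= s < (minn m k).+1)
      ('C(m, s) * 'C(l - m, k - s) * 'C(n - l - m, k - s))) * ((n - l).+1 - k)
   <= k * ('C(l, k) * 'C(n - l, k)))%N.
Proof.
move=> hA hml hk.
rewrite big_distrl /=.
apply: (@leq_trans (\sum_(0 <= s < (minn m k).+1)
      ('C(m, s) * 'C(l - m, k - s)) * (k * 'C(n - l, k))))%N.
  rewrite big_nat_cond [X in (_ <= X)%N]big_nat_cond.
  apply: leq_sum => s /andP [/andP [_ hs] _].
  case: s hs => [|s] hs.
    by rewrite (@bin_small (l - m) (k - 0)) ?muln0 ?mul0n //; lia.
  have hsk : (s.+1 <= k)%N by lia.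
  rewrite -mulnA leq_mul2l; apply/orP; right.
  apply: (@leq_trans ('C(n - l, k - s.+1) * ((n - l).+1 - k))).
    by apply: leq_mul => //; apply: leq_bin2l; exact: leq_subr.
  apply: leq_trans (@L1 (n - l) (k - s.+1) k _) _; first by lia.
  rewrite leq_mul2l; apply/orP; right.
  have -> : (k - s.+1).+1 = (k - s)%N by lia.
  apply: Lmono2 => //; lia.
rewrite -big_distrl /=; apply: (@leq_trans ('C(l, k) * (k * 'C(n - l, k)))); last by rewrite mulnCA.
rewrite leq_mul2r; apply/orP; right.
apply: (leq_trans (@sum_ext (fun s => 'C(m, s) * 'C(l - m, k - s))%N (minn m k).+1 k.+1 _)); first by lia.
rewrite big_mkord binomial.Vandermonde subnKC //.
Qed.

Lemma termB m d N N' k s : (s <= k)%N -> (N' <= N)%N ->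
  ('C(m, s) * 'C(d, k - s) * 'C(N', k - s) * ((d.+1 - k) * (N.+1 - k)) ^ s
   <= (m * k * k) ^ s * ('C(d, k) * 'C(N, k)))%N.
Proof.
move=> hs hN.
have e1 : ('C(m, s) * 'C(d, k - s) * 'C(N', k - s) * ((d.+1 - k) * (N.+1 - k)) ^ s
  = 'C(m, s) * ('C(d, k - s) * (d.+1 - k) ^ s) * ('C(N', k - s) * (N.+1 - k) ^ s))%N.
  rewrite expnMn; move: ('C(m, s)) ('C(d, k - s)) ('C(N', k - s)) ((d.+1 - k) ^ s)%N ((N.+1 - k) ^ s)%N.
  by move=> *; ring.
have e2 : ((m * k * k) ^ s * ('C(d, k) * 'C(N, k))
  = m ^ s * (k ^ s * 'C(d, k)) * (k ^ s * 'C(N, k)))%N.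
  rewrite !expnMn; move: ('C(d, k)) ('C(N, k)) (m ^ s)%N (k ^ s)%N; by move=> *; ring.
rewrite e1 e2; apply: leq_mul; first apply: leq_mul.
- exact: Lbin_exp.
- exact: L2.
apply: leq_trans (@L2 N k s hs); rewrite leq_mul2r; apply/orP; right.
exact: leq_bin2l.
Qed.

Section F.
Local Open Scope nat_scope.
Lemma facts n l p k : p = (2 * k)%N -> (2 <= k)%N -> (k <= l)%N -> (l * (p * p) < n)%N ->
  [/\ (k <= (n - l).+1 - k)%N, (k * n <= p * ((n - l).+1 - k))%N,
      (k ^ 3 * l <= (k - 1) * ((n - l).+1 - k))%N & (k <= n - l)%N].
Proof.
move=> -> hk hkl hn.
set X := (k * k * l)%N.
have e : (l * (2 * k * (2 * k)) = 4 * X)%N by rewrite /X; ring.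
rewrite e in hn.
have h1 : (2 * l <= X)%N by rewrite /X; apply: leq_mul => //; nia.
have h2 : (2 * k <= X)%N by rewrite /X; nia.
have hA : (3 * X <= (n - l).+1 - k)%N by lia.
have hkX : (2 * X <= k * X)%N by rewrite leq_mul2r hk orbT.
split; try lia.
  apply: (@leq_trans (k * (2 * ((n - l).+1 - k)))); last by apply: eq_leq; ring.
  rewrite leq_mul2l; apply/orP; right; lia.
have e3 : (k ^ 3 * l = k * X)%N by rewrite /X; ring.
rewrite e3; apply: (@leq_trans ((k - 1) * (3 * X))); last by rewrite leq_mul2l hA orbT.
rewrite mulnBl mul1n; lia.
Qed.
End F.

Theorem lemma2 (n p l : nat) :
  ~~ odd p -> (3 <= p)%N -> (p * p <= n)%N ->
  (p./2 <= l)%N -> (l * (p * p) < n)%N ->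
  forall m : nat, (m <= l)%N ->
    `|(mu n l p m)%:~R| / (mu n l p 0)%:~R
      <= Num.max ((1 - (m%:R / l%:R)) ^+ p./2) (p%:R / n%:R :> rat).
Proof.
move=> hodd hp3 hpn hkl hln m hm.
rewrite mu0E.
have hT := mu_norm n l p m.
have hp : p = (2 * p./2)%N.
  by rewrite -[in LHS](odd_double_half p) (negbTE hodd) add0n -mul2n.
set k := p./2 in hp hkl hT *.
have hk2 : (2 <= k)%N by lia.
have [F1 F2 F3 F4] := @facts n l p k hp hk2 hkl hln.
set T := (\sum_(0 <= s < (minn m k).+1) _)%N in hT.
set C0 := ('C(l, k) * 'C(n - l, k))%N.
have hC0 : (0 < C0)%N by rewrite muln_gt0 !bin_gt0 hkl F4.
have eC : (((C0%:R : int)%:~R) : rat) = C0%:R by rewrite rmorph_nat.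
have hT' : `|(mu n l p m)%:~R : rat| <= T%:R.
  by rewrite -intr_norm -(rmorph_nat (intr : int -> rat)) ler_int.
rewrite eC ler_pdivrMr ?ltr0n //; apply: le_trans hT' _.
have hl0 : (0 < l)%N by lia.
have hn0 : (0 < n)%N by lia.
case: (ltnP l (m + k)) => hcase.
  have hA := @caseA n l m k hcase hm F1.
  have hTn : (T * n <= p * C0)%N.
    have hM : (0 < k * ((n - l).+1 - k))%N by rewrite muln_gt0; lia.
    rewrite -(leq_pmul2r hM).
    apply: (@leq_trans ((T * ((n - l).+1 - k)) * (k * n))).
      by apply: eq_leq; ring.
    apply: (@leq_trans ((k * C0) * (p * ((n - l).+1 - k)))).
      exact: leq_mul.
    by apply: eq_leq; rewrite /C0; ring.
  apply: (@le_trans _ _ (p%:R / n%:R * C0%:R)).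
    rewrite mulrAC ler_pdivlMr ?ltr0n // -!natrM ler_nat.
    exact: hTn.
  by rewrite ler_wpM2r ?ler0n // le_max lexx orbT.
set d := (l - m)%N.
have hd : (k <= d)%N by rewrite /d; lia.
have hld : l = (d + m)%N by rewrite /d; lia.
set M := ((n - l).+1 - k)%N.
set D := ((d.+1 - k) * M)%N.
set E := (m * k * k)%N.
have hD : (0 < D)%N by rewrite /D /M muln_gt0; lia.
have hK := @KeyB d l m k M hk2 hd hld F3.
rewrite -!bin_ffact in hK.
have hK' : ('C(d, k) * l ^ k * D + E * (d ^ k * 'C(l, k)) <= D * (d ^ k * 'C(l, k)))%N.
  have hf : (0 < k`!)%N by exact: fact_gt0.
  rewrite -(leq_pmul2r hf).
  apply: (@leq_trans ('C(d, k) * k`! * l ^ k * D + E * d ^ k * ('C(l, k) * k`!))%N).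
    by apply: eq_leq; ring.
  apply: leq_trans hK _.
  rewrite /D; apply: eq_leq; move: ((d.+1 - k) * M)%N (d ^ k)%N ('C(l, k)) (k`!) => a b c e; ring.
set rho : rat := E%:R / D%:R.
have hrho0 : 0 <= rho by rewrite /rho divr_ge0 ?ler0n.
set X := ('C(d, k) * l ^ k)%N.
set Y := (d ^ k * 'C(l, k))%N.
have hX : (X%:R : rat) <= (1 - rho) * Y%:R.
  have hDr : (0 : rat) < D%:R by rewrite ltr0n.
  rewrite -(ler_pM2r hDr).
  have -> : (1 - rho) * Y%:R * D%:R = D%:R * Y%:R - E%:R * (Y%:R : rat).
    rewrite /rho; field; by rewrite lt0r_neq0.
  by rewrite lerBrDr -!natrM -natrD ler_nat.
set CN := 'C(n - l, k).
set S := (minn m k).+1.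
have hTs : (T%:R : rat) <= (\sum_(0 <= s < S) rho ^+ s) * (('C(d, k) * CN)%:R).
  rewrite /T natr_sum mulr_suml.
  rewrite big_nat_cond [X in _ <= X]big_nat_cond.
  apply: ler_sum => s /andP [/andP [_ hs] _].
  have hsk : (s <= k)%N by rewrite /S in hs; lia.
  have ht := @termB m d (n - l) (n - l - m) k s hsk (leq_subr _ _).
  have hDs : (0 : rat) < (D%:R) ^+ s by rewrite exprn_gt0 ?ltr0n.
  rewrite /rho expr_div_n mulrAC ler_pdivlMr // -!natrX -!natrM ler_nat.
  exact: ht.
have hsum : (1 - rho) * (\sum_(0 <= s < S) rho ^+ s) <= 1.
  have e := subrX1 rho S.
  have hS : 0 <= rho ^+ S by rewrite exprn_ge0.
  rewrite big_mkord.
  have -> : (1 - rho) * (\sum_(i < S) rho ^+ i) = 1 - rho ^+ S.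
    by rewrite -opprB mulNr -e opprB.
  by rewrite lerBlDr lerDl.
have hsum0 : 0 <= \sum_(0 <= s < S) rho ^+ s by apply: sumr_ge0 => s _; rewrite exprn_ge0.
have hfin : (T%:R : rat) * (l%:R ^+ k) <= (d%:R ^+ k) * C0%:R.
  apply: le_trans (ler_wpM2r (exprn_ge0 _ (ler0n _ _)) hTs) _.
  have -> : (\sum_(0 <= s < S) rho ^+ s) * ('C(d, k) * CN)%:R * l%:R ^+ k
     = (\sum_(0 <= s < S) rho ^+ s) * X%:R * CN%:R.
    by rewrite /X !natrM natrX; ring.
  apply: le_trans (ler_wpM2r (ler0n _ _) (ler_wpM2l hsum0 hX)) _.
  have -> : (\sum_(0 <= s < S) rho ^+ s) * ((1 - rho) * Y%:R) * CN%:R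
     = ((1 - rho) * (\sum_(0 <= s < S) rho ^+ s)) * (Y%:R * CN%:R) by ring.
  apply: le_trans (ler_wpM2r _ hsum) _; first by rewrite mulr_ge0 ?ler0n.
  by rewrite mul1r /Y /C0 !natrM natrX mulrA.
have hl : (0 : rat) < l%:R by rewrite ltr0n.
have e1 : 1 - m%:R / l%:R = d%:R / (l%:R : rat).
  by rewrite /d natrB // mulrBl divff ?lt0r_neq0.
apply: (@le_trans _ _ ((1 - m%:R / l%:R) ^+ k * C0%:R)); last first.
  by rewrite ler_wpM2r ?ler0n // le_max lexx.
rewrite e1 expr_div_n mulrAC ler_pdivlMr ?exprn_gt0 //.
Qed.
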